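(* Let $g\colon\mathbb X\to\mathbb Y$ be continuous and calm in direction $u\in\mathbb S_{\mathbb X}$ at $\bar x\in\mathbb X$, let $D\subset\mathbb Y$ be closed, let $\Phi(x):=g(x)-D$, and assume $(\bar x,0)\in\operatorname{gph}\Phi$. Let $\{e_1,\dots,e_m\}$ be an orthonormal basis of $\mathbb Y$. Suppose there do not exist a direction $v\in\mathbb Y$ and a nonzero $\lambda\in\mathcal N_D(g(\bar x);v)$ with $0\in D^*g(\bar x;(u,v))(\lambda)$ for which there are sequences $\{x_k\}\subset\mathbb X$ with $x_k\ne\bar x$, $\{z_k\}\subset D$, $\{\lambda_k\}\subset\mathbb Y$, $\{\eta_k\}\subset\mathbb X$ such that $x_k\to\bar x$, $z_k\to g(\bar x)$, $\lambda_k\to\lambda$, $\eta_k\to0$, $(x_k-\bar x)/\|x_k-\bar x\|\to u$, $(z_k-g(\bar x))/\|x_k-\bar x\|\to v$, $(g(x_k)-g(\bar x))/\|x_k-\bar x\|\to v$, and for all $k$ and $i\in\{1,\dots,m\}$: $\eta_k\in\widehat D^*g(x_k)(\lambda_k)$, $\lambda_k\in\widehat{\mathcal N}_D(z_k)$, and $\langle\lambda,e_i\rangle\langle g(x_k)-z_k,e_i\rangle>0$ whenever $\langle\lambda,e_i\rangle\ne0$. Then $\Phi$ is quasi-normal in direction $u$ at $(\bar x,0)$ w.r.t. $\{e_1,\dots,e_m\}$. Moreover, if $g$ is calm at every point of a neighbourhood of $\bar x$ (e.g. Lipschitz continuous near $\bar x$), the two conditions are equivalent.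
   Context: $\widehat{\mathcal N}_D$ regular normal cone; $\mathcal N_D(y;v)$ directional limiting normal cone (limits of $\eta_k\in\widehat{\mathcal N}_D(y+t_kv_k)$, $v_k\to v$, $t_k\searrow0$). Regular coderivative $\widehat D^*g(x)(y^* )=\{x^*\mid(x^*,-y^* )\in\widehat{\mathcal N}_{\operatorname{gph}g}(x,g(x))\}$; directional limiting coderivative $D^*g(\bar x;(u,v))(y^* )=\{x^*\mid(x^*,-y^* )\in\mathcal N_{\operatorname{gph}g}((\bar x,g(\bar x));(u,v))\}$; analogously for $\Phi$. $g$ is calm in direction $u$ at $\bar x$ if there are $\varepsilon,\delta,L>0$ with $\|g(x')-g(\bar x)\|\le L\|x'-\bar x\|$ for all $x'\in\bar x+\mathbb B_{\varepsilon,\delta}(u)$, $\mathbb B_{\varepsilon,\delta}(u)=\{v\mid\|\|v\|u-\|u\|v\|\le\delta\|u\|\|v\|,\ \|v\|\le\varepsilon\}$; calm at $x$ means $\|g(x')-g(x)\|\le L\|x'-x\|$ for $x'$ near $x$. Quasi-normality in direction $u$ at $(\bar x,\bar y)$ w.r.t. $\{e_i\}$: there is no nonzero $\lambda$ with $0\in D^*\Phi((\bar x,\bar y);(u,0))(\lambda)$ for which there exist $\{(x_k,y_k)\}\subset\operatorname{gph}\Phi$ with $x_k\ne\bar x$, $\{\lambda_k\}$, $\{\eta_k\}$ with $x_k\to\bar x$, $y_k\to\bar y$, $\lambda_k\to\lambda$, $\eta_k\to0$, $(x_k-\bar x)/\|x_k-\bar x\|\to u$, $(y_k-\bar y)/\|x_k-\bar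 x\|\to0$, $\eta_k\in\widehat D^*\Phi(x_k,y_k)(\lambda_k)$, and $\langle\lambda,e_i\rangle\langle y_k-\bar y,e_i\rangle>0$ whenever $\langle\lambda,e_i\rangle\ne0$. *)

(* Defs.v *)
(* X = R^n, Y = R^m as row vectors 'rV[R]_n with the
   standard (Euclidean) inner product, over R : realType. *)
From HB Require Import structures.
From mathcomp Require Import all_boot all_order all_algebra.
From mathcomp Require Import reals.
Set Implicit Arguments. Unset Strict Implicit. Unset Printing Implicit Defensive.
Import Order.TTheory GRing.Theory Num.Theory.
Local Open Scope ring_scope.

Section Defs.
Variable R : realType.

Definition dotv {p} (x y : 'rV[R]_p) : R := \sum_(i < p) x 0 i * y 0 i.
Definition enorm {p} (x : 'rV[R]_p) : R := Num.sqrt (dotv x x).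

Definition vcvg {p} (s : nat -> 'rV[R]_p) (l : 'rV[R]_p) : Prop :=
  forall eps : R, 0 < eps -> exists N : nat, forall k, (N <= k)%N -> enorm (s k - l) < eps.
Definition rcvg (s : nat -> R) (l : R) : Prop :=
  forall eps : R, 0 < eps -> exists N : nat, forall k, (N <= k)%N -> `|s k - l| < eps.

Definition vclosed {p} (D : 'rV[R]_p -> Prop) : Prop :=
  forall (s : nat -> 'rV[R]_p) l, (forall k, D (s k)) -> vcvg s l -> D l.
Definition vcontinuous {n m} (g : 'rV[R]_n -> 'rV[R]_m) : Prop :=
  forall x eps, 0 < eps -> exists2 delta, 0 < delta &
    forall x', enorm (x' - x) < delta -> enorm (g x' - g x) < eps.

(* regular (Frechet) normal cone: eta in N^_D(y) (empty if y notin D) *)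
Definition rnormal {p} (D : 'rV[R]_p -> Prop) (y eta : 'rV[R]_p) : Prop :=
  D y /\ forall eps, 0 < eps -> exists2 delta, 0 < delta &
    forall y', D y' -> enorm (y' - y) < delta -> dotv eta (y' - y) <= eps * enorm (y' - y).

(* directional limiting normal cone: eta in N_D(y; v) *)
Definition dnormal {p} (D : 'rV[R]_p -> Prop) (y v eta : 'rV[R]_p) : Prop :=
  exists (t : nat -> R) (vs etas : nat -> 'rV[R]_p),
    (forall k, 0 < t k) /\ rcvg t 0 /\ vcvg vs v /\ vcvg etas eta /\
    forall k, rnormal D (y + t k *: vs k) (etas k).

(* set-valued maps Phi : R^n => R^m, encoded by Phi x y <-> y \in Phi(x);
   the graph lives in R^(n+m) = R^n x R^m, (x,y) ~ row_mx x y *)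
Definition gph {n m} (Phi : 'rV[R]_n -> 'rV[R]_m -> Prop) : 'rV[R]_(n + m) -> Prop :=
  fun w => Phi (lsubmx w) (rsubmx w).

(* regular coderivative: xs in D^*Phi(x,y)(ys) *)
Definition rcoder {n m} (Phi : 'rV[R]_n -> 'rV[R]_m -> Prop) (x : 'rV[R]_n) (y : 'rV[R]_m)
  (ys : 'rV[R]_m) (xs : 'rV[R]_n) : Prop :=
  rnormal (gph Phi) (row_mx x y) (row_mx xs (- ys)).

(* directional limiting coderivative: xs in D^*Phi((x,y);(u,v))(ys) *)
Definition dcoder {n m} (Phi : 'rV[R]_n -> 'rV[R]_m -> Prop) (x : 'rV[R]_n) (y : 'rV[R]_m)
  (u : 'rV[R]_n) (v : 'rV[R]_m) (ys : 'rV[R]_m) (xs : 'rV[R]_n) : Prop :=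
  dnormal (gph Phi) (row_mx x y) (row_mx u v) (row_mx xs (- ys)).

Definition fmap {n m} (g : 'rV[R]_n -> 'rV[R]_m) : 'rV[R]_n -> 'rV[R]_m -> Prop :=
  fun x y => y = g x.

Definition dirball {n} (eps delta : R) (u : 'rV[R]_n) (v : 'rV[R]_n) : Prop :=
  enorm (enorm v *: u - enorm u *: v) <= delta * enorm u * enorm v /\ enorm v <= eps.

Definition calm_dir {n m} (g : 'rV[R]_n -> 'rV[R]_m) (xb u : 'rV[R]_n) : Prop :=
  exists eps delta L, [/\ 0 < eps, 0 < delta, 0 < L &
    forall x', dirball eps delta u (x' - xb) -> enorm (g x' - g xb) <= L * enorm (x' - xb)].

Definition calm_at {n m} (g : 'rV[R]_n -> 'rV[R]_m) (x : 'rV[R]_n) : Prop :=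
  exists L r, [/\ 0 < L, 0 < r &
    forall x', enorm (x' - x) < r -> enorm (g x' - g x) <= L * enorm (x' - x)].

Definition orthonormal_basis {m} (e : 'I_m -> 'rV[R]_m) : Prop :=
  forall i j, dotv (e i) (e j) = (i == j)%:R.

Definition quasi_normal_dir {n m} (Phi : 'rV[R]_n -> 'rV[R]_m -> Prop)
  (xb : 'rV[R]_n) (yb : 'rV[R]_m) (u : 'rV[R]_n) (e : 'I_m -> 'rV[R]_m) : Prop :=
  ~ exists lam : 'rV[R]_m, lam <> 0 /\ dcoder Phi xb yb u 0 lam 0 /\
    exists (xs : nat -> 'rV[R]_n) (ys : nat -> 'rV[R]_m)
           (lams : nat -> 'rV[R]_m) (etas : nat -> 'rV[R]_n),
      (forall k, Phi (xs k) (ys k)) /\ (forall k, xs k <> xb) /\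
      vcvg xs xb /\ vcvg ys yb /\ vcvg lams lam /\ vcvg etas 0 /\
      vcvg (fun k => (enorm (xs k - xb))^-1 *: (xs k - xb)) u /\
      vcvg (fun k => (enorm (xs k - xb))^-1 *: (ys k - yb)) 0 /\
      (forall k, rcoder Phi (xs k) (ys k) (lams k) (etas k)) /\
      (forall k i, dotv lam (e i) != 0 -> 0 < dotv lam (e i) * dotv (ys k - yb) (e i)).

Definition cond_gD {n m} (g : 'rV[R]_n -> 'rV[R]_m) (D : 'rV[R]_m -> Prop)
  (xb u : 'rV[R]_n) (e : 'I_m -> 'rV[R]_m) : Prop :=
  ~ exists (v lam : 'rV[R]_m), lam <> 0 /\ dnormal D (g xb) v lam /\
    dcoder (fmap g) xb (g xb) u v lam 0 /\
    exists (xs : nat -> 'rV[R]_n) (zs : nat -> 'rV[R]_m)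
           (lams : nat -> 'rV[R]_m) (etas : nat -> 'rV[R]_n),
      (forall k, xs k <> xb) /\ (forall k, D (zs k)) /\
      vcvg xs xb /\ vcvg zs (g xb) /\ vcvg lams lam /\ vcvg etas 0 /\
      vcvg (fun k => (enorm (xs k - xb))^-1 *: (xs k - xb)) u /\
      vcvg (fun k => (enorm (xs k - xb))^-1 *: (zs k - g xb)) v /\
      vcvg (fun k => (enorm (xs k - xb))^-1 *: (g (xs k) - g xb)) v /\
      (forall k, rcoder (fmap g) (xs k) (g (xs k)) (lams k) (etas k)) /\
      (forall k, rnormal D (zs k) (lams k)) /\
      (forall k i, dotv lam (e i) != 0 -> 0 < dotv lam (e i) * dotv (g (xs k) - zs k) (e i)).

Definition PhigD {n m} (g : 'rV[R]_n -> 'rV[R]_m) (D : 'rV[R]_m -> Prop)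
  : 'rV[R]_n -> 'rV[R]_m -> Prop := fun x y => D (g x - y).

End Defs.

(* Main.v *)
From HB Require Import structures.
From mathcomp Require Import all_boot all_order all_algebra.
From mathcomp Require Import all_classical all_reals.
From mathcomp Require Import topology normedtype sequences.
Import numFieldNormedType.Exports.
From mathcomp Require Import ring lra.
From mathcomp Require Import reals.
Require Import Defs.
Import Order.TTheory GRing.Theory Num.Theory.
Local Open Scope ring_scope.
Set Implicit Arguments. Unset Strict Implicit. Unset Printing Implicit Defensive.

Section Aux.
Variable R : realType.
Implicit Types (p : nat).

Lemma dotvC p (x y : 'rV[R]_p) : dotv x y = dotv y x.
Proof. by apply: eq_bigr => i _; rewrite mulrC. Qed.
Lemma dotvDl p (x y z : 'rV[R]_p) : dotv (x + y) z = dotv x z + dotv y z.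
Proof. rewrite /dotv -big_split; apply: eq_bigr => i _; by rewrite mxE mulrDl. Qed.
Lemma dotvZl p a (x z : 'rV[R]_p) : dotv (a *: x) z = a * dotv x z.
Proof. rewrite /dotv mulr_sumr; apply: eq_bigr => i _; by rewrite mxE mulrA. Qed.
Lemma dotvNl p (x z : 'rV[R]_p) : dotv (- x) z = - dotv x z.
Proof. by rewrite -scaleN1r dotvZl mulN1r. Qed.
Lemma dotvBl p (x y z : 'rV[R]_p) : dotv (x - y) z = dotv x z - dotv y z.
Proof. by rewrite dotvDl dotvNl. Qed.
Lemma dotv0l p (z : 'rV[R]_p) : dotv 0 z = 0.
Proof. by rewrite /dotv big1 // => i _; rewrite mxE mul0r. Qed.
Lemma dotvDr p (x y z : 'rV[R]_p) : dotv z (x + y) = dotv z x + dotv z y.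
Proof. by rewrite dotvC dotvDl !(dotvC z). Qed.
Lemma dotvZr p a (x z : 'rV[R]_p) : dotv z (a *: x) = a * dotv z x.
Proof. by rewrite dotvC dotvZl dotvC. Qed.
Lemma dotvNr p (x z : 'rV[R]_p) : dotv z (- x) = - dotv z x.
Proof. by rewrite dotvC dotvNl dotvC. Qed.
Lemma dotvBr p (x y z : 'rV[R]_p) : dotv z (x - y) = dotv z x - dotv z y.
Proof. by rewrite dotvDr dotvNr. Qed.
Lemma dotv0r p (z : 'rV[R]_p) : dotv z 0 = 0.
Proof. by rewrite dotvC dotv0l. Qed.

Lemma dotv_ge0 p (x : 'rV[R]_p) : 0 <= dotv x x.
Proof. by apply: sumr_ge0 => i _; rewrite -expr2 sqr_ge0. Qed.

Lemma dotv_eq0 p (x : 'rV[R]_p) : dotv x x = 0 -> x = 0.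
Proof.
move=> /eqP; rewrite psumr_eq0 => [H|i _]; last by rewrite -expr2 sqr_ge0.
apply/matrixP => i j; rewrite mxE (ord1 i).
have /allP/(_ j) := H; rewrite mem_index_enum => /(_ isT) /implyP /(_ isT).
by rewrite -expr2 sqrf_eq0 => /eqP.
Qed.

Lemma enorm_ge0 p (x : 'rV[R]_p) : 0 <= enorm x.
Proof. exact: sqrtr_ge0. Qed.
Lemma enorm_sqr p (x : 'rV[R]_p) : enorm x ^+ 2 = dotv x x.
Proof. by rewrite sqr_sqrtr // dotv_ge0. Qed.
Lemma enorm0 p : enorm (0 : 'rV[R]_p) = 0.
Proof. by rewrite /enorm dotv0l sqrtr0. Qed.
Lemma enorm_eq0 p (x : 'rV[R]_p) : enorm x = 0 -> x = 0.
Proof. by move=> /eqP; rewrite sqrtr_eq0 => H; apply: dotv_eq0; apply/eqP; rewrite eq_le H dotv_ge0. Qed.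
Lemma enormZ p a (x : 'rV[R]_p) : enorm (a *: x) = `|a| * enorm x.
Proof. by rewrite /enorm dotvZl dotvZr mulrA -expr2 sqrtrM ?sqr_ge0 // sqrtr_sqr. Qed.
Lemma enormN p (x : 'rV[R]_p) : enorm (- x) = enorm x.
Proof. by rewrite -scaleN1r enormZ normrN1 mul1r. Qed.
Lemma enormB p (x y : 'rV[R]_p) : enorm (x - y) = enorm (y - x).
Proof. by rewrite -enormN opprB. Qed.

Lemma cs_sqr p (x y : 'rV[R]_p) : dotv x y ^+ 2 <= dotv x x * dotv y y.
Proof.
have [y0|ypos] := eqVneq (dotv y y) 0.
  by rewrite (dotv_eq0 y0) !dotv0r expr0n /= mulr0.
have yp : 0 < dotv y y by rewrite lt_def ypos dotv_ge0.
have : 0 <= dotv y y * (dotv y y * dotv x x - dotv x y ^+ 2).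
  have -> : dotv y y * (dotv y y * dotv x x - dotv x y ^+ 2) =
     dotv (dotv y y *: x - dotv x y *: y) (dotv y y *: x - dotv x y *: y).
    by rewrite !(dotvBl, dotvBr, dotvZl, dotvZr) (dotvC y x); ring.
  exact: dotv_ge0.
rewrite pmulr_rge0 // subr_ge0 => H.
by rewrite mulrC.
Qed.

Lemma cs p (x y : 'rV[R]_p) : dotv x y <= enorm x * enorm y.
Proof.
apply: le_trans (ler_norm _) _.
rewrite -sqrtr_sqr /enorm -sqrtrM ?dotv_ge0 //; apply: ler_wsqrtr; exact: cs_sqr.
Qed.

Lemma enormD p (x y : 'rV[R]_p) : enorm (x + y) <= enorm x + enorm y.
Proof.
rewrite -(ler_pXn2r (_ : 0 < 2)%N) ?nnegrE ?addr_ge0 ?enorm_ge0 //.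
rewrite enorm_sqr dotvDl !dotvDr (dotvC y x) sqrrD !enorm_sqr.
have := cs x y; lra.
Qed.
End Aux.

Section Aux2.
Variable R : realType.

Lemma dotv_row_mx n m (a c : 'rV[R]_n) (b d : 'rV[R]_m) :
  dotv (row_mx a b) (row_mx c d) = dotv a c + dotv b d.
Proof.
rewrite /dotv big_split_ord /=; congr (_ + _); apply: eq_bigr => i _;
  by rewrite ?row_mxEl ?row_mxEr.
Qed.

Lemma enorm_row_mx_l n m (a : 'rV[R]_n) (b : 'rV[R]_m) : enorm a <= enorm (row_mx a b).
Proof. by rewrite /enorm ler_wsqrtr // dotv_row_mx lerDl dotv_ge0. Qed.
Lemma enorm_row_mx_r n m (a : 'rV[R]_n) (b : 'rV[R]_m) : enorm b <= enorm (row_mx a b).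
Proof. by rewrite /enorm ler_wsqrtr // dotv_row_mx lerDr dotv_ge0. Qed.
Lemma enorm_row_mx n m (a : 'rV[R]_n) (b : 'rV[R]_m) : enorm (row_mx a b) <= enorm a + enorm b.
Proof.
have -> : row_mx a b = row_mx a 0 + row_mx 0 b by rewrite add_row_mx addr0 add0r.
apply: le_trans (enormD _ _) _; rewrite /enorm !dotv_row_mx !dotv0l addr0 add0r.
by [].
Qed.
Lemma enorm_row_mx0 n m (b : 'rV[R]_m) : enorm (row_mx (0 : 'rV[R]_n) b) = enorm b.
Proof. by rewrite /enorm dotv_row_mx dotv0l add0r. Qed.

Lemma coord_le p (x : 'rV[R]_p) i : `|x 0 i| <= enorm x.
Proof.
rewrite -sqrtr_sqr /enorm ler_wsqrtr // /dotv (bigD1 i) //= -expr2 lerDl.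
by apply: sumr_ge0 => j _; rewrite -expr2 sqr_ge0.
Qed.

Lemma enorm_lt p (x : 'rV[R]_p) e : 0 < e -> (enorm x < e) = (dotv x x < e ^+ 2).
Proof.
move=> ep; rewrite -enorm_sqr ltr_pXn2r // nnegrE ?enorm_ge0 // ltW //.
Qed.

Lemma enorm_gt0 p (x : 'rV[R]_p) : x <> 0 -> 0 < enorm x.
Proof.
move=> nx; rewrite lt_def enorm_ge0 andbT; apply/eqP => /enorm_eq0; exact: nx.
Qed.

End Aux2.

Section Cvg.
Variable R : realType.

Lemma vcvg_ext p (s t : nat -> 'rV[R]_p) l : (forall k, s k = t k) -> vcvg s l -> vcvg t l.
Proof. by move=> E H e ep; have [N HN] := H e ep; exists N => k /HN; rewrite E. Qed.

Lemma vcvg_cst p (l : 'rV[R]_p) : vcvg (fun _ => l) l.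
Proof. by move=> e ep; exists 0%N => k _; rewrite subrr enorm0. Qed.

Lemma vcvgD p (s t : nat -> 'rV[R]_p) a b : vcvg s a -> vcvg t b ->
  vcvg (fun k => s k + t k) (a + b).
Proof.
move=> Hs Ht e ep.
have e2 : 0 < e / 2 by rewrite divr_gt0.
have [N1 H1] := Hs _ e2; have [N2 H2] := Ht _ e2.
exists (maxn N1 N2) => k; rewrite geq_max => /andP [k1 k2].
have -> : s k + t k - (a + b) = (s k - a) + (t k - b) by rewrite opprD addrACA.
apply: le_lt_trans (enormD _ _) _.
have := H1 _ k1; have := H2 _ k2; lra.
Qed.

Lemma vcvgN p (s : nat -> 'rV[R]_p) a : vcvg s a -> vcvg (fun k => - s k) (- a).
Proof. by move=> H e ep; have [N HN] := H e ep; exists N => k /HN; rewrite -opprD enormN. Qed.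

Lemma vcvgB p (s t : nat -> 'rV[R]_p) a b : vcvg s a -> vcvg t b ->
  vcvg (fun k => s k - t k) (a - b).
Proof. by move=> Hs Ht; apply: vcvgD => //; exact: vcvgN. Qed.

Lemma vcvg_row_mx n m (s : nat -> 'rV[R]_n) (t : nat -> 'rV[R]_m) a b :
  vcvg s a -> vcvg t b -> vcvg (fun k => row_mx (s k) (t k)) (row_mx a b).
Proof.
move=> Hs Ht e ep.
have e2 : 0 < e / 2 by rewrite divr_gt0.
have [N1 H1] := Hs _ e2; have [N2 H2] := Ht _ e2.
exists (maxn N1 N2) => k; rewrite geq_max => /andP [k1 k2].
rewrite opp_row_mx add_row_mx; apply: le_lt_trans (enorm_row_mx _ _) _.
have := H1 _ k1; have := H2 _ k2; lra.
Qed.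

Lemma vcvg_sub p (s : nat -> 'rV[R]_p) l (f : nat -> nat) :
  (forall k, (k <= f k)%N) -> vcvg s l -> vcvg (fun k => s (f k)) l.
Proof.
move=> Hf H e ep; have [N HN] := H e ep; exists N => k Nk.
apply: HN; exact: leq_trans Nk (Hf k).
Qed.

Lemma rcvg_sub (s : nat -> R) l (f : nat -> nat) :
  (forall k, (k <= f k)%N) -> rcvg s l -> rcvg (fun k => s (f k)) l.
Proof.
move=> Hf H e ep; have [N HN] := H e ep; exists N => k Nk.
apply: HN; exact: leq_trans Nk (Hf k).
Qed.

Lemma vcvg_cont n m (g : 'rV[R]_n -> 'rV[R]_m) xs x :
  vcontinuous g -> vcvg xs x -> vcvg (fun k => g (xs k)) (g x).
Proof.
move=> Hg H e ep; have [d dp Hd] := Hg x e ep.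
have [N HN] := H d dp; exists N => k /HN; exact: Hd.
Qed.

Lemma rcvg_enorm p (s : nat -> 'rV[R]_p) l :
  vcvg s l -> rcvg (fun k => enorm (s k - l)) 0.
Proof.
move=> H e ep; have [N HN] := H e ep; exists N => k /HN.
by rewrite subr0 ger0_norm ?enorm_ge0.
Qed.

End Cvg.

Ltac veq := apply/matrixP => ? ?; rewrite !mxE; ring.

Section Transfer.
Variable R : realType.

Lemma gphE n m (Phi : 'rV[R]_n -> 'rV[R]_m -> Prop) a b :
  gph Phi (row_mx a b) = Phi a b.
Proof. by rewrite /gph row_mxKl row_mxKr. Qed.

Lemma transA n m (g : 'rV[R]_n -> 'rV[R]_m) D x y eta lam :
  rnormal (gph (PhigD g D)) (row_mx x y) (row_mx eta (- lam)) ->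
  rnormal D (g x - y) lam /\
  rnormal (gph (fmap g)) (row_mx x (g x)) (row_mx eta (- lam)).
Proof.
move=> [Hin Hf]; rewrite gphE /PhigD in Hin; split.
  split=> // e ep; have [d dp Hd] := Hf e ep; exists d => // d' Dd' hd'.
  have E : row_mx x (g x - d') - row_mx x y = row_mx 0 (- (d' - (g x - y))).
    by rewrite opp_row_mx add_row_mx; congr row_mx; veq.
  have := Hd (row_mx x (g x - d')).
  rewrite gphE /PhigD E dotv_row_mx dotv0r add0r enorm_row_mx0 enormN dotvNl dotvNr opprK.
  apply.
    by have -> : g x - (g x - d') = d' by veq.
  exact: hd'.
split; first by rewrite gphE.
move=> e ep; have [d dp Hd] := Hf e ep; exists d => // w' Hw' hw'.
rewrite /gph /fmap in Hw'.
have E : row_mx (lsubmx w') (g (lsubmx w') - (g x - y)) - row_mx x y =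
    row_mx (lsubmx w') (rsubmx w') - row_mx x (g x).
  rewrite Hw' !opp_row_mx !add_row_mx; congr row_mx; veq.
rewrite hsubmxK in E.
rewrite -E; apply: Hd; last by rewrite E.
rewrite gphE /PhigD.
by have -> : g (lsubmx w') - (g (lsubmx w') - (g x - y)) = g x - y by veq.
Qed.

Lemma transB n m (g : 'rV[R]_n -> 'rV[R]_m) D x z eta lam :
  calm_at g x -> rnormal D z lam ->
  rnormal (gph (fmap g)) (row_mx x (g x)) (row_mx eta (- lam)) ->
  rnormal (gph (PhigD g D)) (row_mx x (g x - z)) (row_mx eta (- lam)).
Proof.
move=> [L [r [Lp rp Hc]]] [Dz HD] [_ Hg]; split.
  by rewrite gphE /PhigD; have -> : g x - (g x - z) = z by veq.
move=> e ep.
set K := 1 + L.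
have Kp : 0 < K by rewrite /K; lra.
set e1 := e / (2 * K).
have e1p : 0 < e1 by rewrite /e1 divr_gt0 // mulr_gt0.
have e1K : e1 * K = e / 2 by rewrite /e1; field; rewrite lt0r_neq0.
have [d1 d1p Hd1] := Hg e1 e1p; have [d2 d2p Hd2] := HD e1 e1p.
exists (Num.min r (Num.min (d1 / K) (d2 / K))).
  by rewrite !lt_min rp !divr_gt0.
move=> w' Hw'; rewrite !lt_min => /andP [hr /andP [h1 h2]].
rewrite -(hsubmxK w') in Hw' hr h1 h2 *.
move: Hw' hr h1 h2; set x' := lsubmx w'; set y' := rsubmx w'; rewrite gphE /PhigD => Hw' hr h1 h2.
set rho := enorm (row_mx x' y' - row_mx x (g x - z)).
have {}hr : rho < r := hr.
have {}h1 : rho < d1 / K := h1.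
have {}h2 : rho < d2 / K := h2.
have Erho : row_mx x' y' - row_mx x (g x - z) = row_mx (x' - x) (y' - (g x - z))
  by rewrite opp_row_mx add_row_mx.
have hdx : enorm (x' - x) <= rho by rewrite /rho Erho enorm_row_mx_l.
have hdy : enorm (y' - (g x - z)) <= rho by rewrite /rho Erho enorm_row_mx_r.
have hg : enorm (g x' - g x) <= L * enorm (x' - x) by apply: Hc; lra.
have hg' : L * enorm (x' - x) <= L * rho by rewrite ler_wpM2l // ltW.
have rho0 : 0 <= rho by exact: enorm_ge0.
have ndx := enorm_ge0 (x' - x).
have E1 : row_mx x' (g x') - row_mx x (g x) = row_mx (x' - x) (g x' - g x)
  by rewrite opp_row_mx add_row_mx.
have n1 : enorm (row_mx (x' - x) (g x' - g x)) <= K * rho.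
  apply: le_trans (enorm_row_mx _ _) _; rewrite /K; lra.
have KrK : K * rho < d1 by move: h1; rewrite ltr_pdivlMr // mulrC.
have I1 := Hd1 (row_mx x' (g x')).
rewrite gphE /fmap E1 dotv_row_mx in I1.
have {I1} I1 := I1 (erefl _) (le_lt_trans n1 KrK).
have I1' : e1 * enorm (row_mx (x' - x) (g x' - g x)) <= e1 * (K * rho)
  by rewrite ler_wpM2l // ltW.
have E2 : g x' - y' - z = (g x' - g x) - (y' - (g x - z)) by veq.
have n2 : enorm (g x' - y' - z) <= K * rho.
  rewrite E2; apply: le_trans (enormD _ _) _; rewrite enormN /K; lra.
have KrK2 : K * rho < d2 by move: h2; rewrite ltr_pdivlMr // mulrC.
have I2 := Hd2 _ Hw' (le_lt_trans n2 KrK2).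
have I2' : e1 * enorm (g x' - y' - z) <= e1 * (K * rho) by rewrite ler_wpM2l // ltW.
rewrite E2 dotvBr in I2. rewrite E2 in I2'.
rewrite [X in dotv _ X]Erho dotv_row_mx.
rewrite dotvNl in I1. rewrite dotvNl.
have : e / 2 * rho + e / 2 * rho = e * rho by field.
have : e1 * (K * rho) = e / 2 * rho by rewrite mulrA e1K.
rewrite -/rho.
lra.
Qed.

End Transfer.

Lemma incr_ge (f : nat -> nat) : (forall k, (f k < f k.+1)%N) -> forall k, (k <= f k)%N.
Proof. move=> H; elim=> [|k IH] //; exact: leq_ltn_trans IH (H k). Qed.

Lemma bw_real (R : realType) (s : nat -> R) (M : R) :
  (forall k, `|s k| <= M) ->
  exists (f : nat -> nat) (l : R), (forall k, (k <= f k)%N) /\ rcvg (fun k => s (f k)) l.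
Proof.
move=> HM.
have [|f fi fc] := @bolzano_weierstrass R s.
  rewrite /bounded_near; near=> M0 => k _ /=.
  apply: le_trans (HM k) _; near: M0; apply: nbhs_pinfty_ge; exact: num_real.
case/cvg_ex: fc => /= l fl.
exists f, l; split.
  apply: incr_ge => k; have := (increasing_seqP f).2 fi k; exact.
move=> eps epos.
have /cvgrPdist_lt/(_ eps epos) [N _ HN] := fl.
exists N => k Nk; rewrite distrC; exact: HN.
Unshelve. all: end_near. Qed.

Lemma bw_vec (R : realType) p (s : nat -> 'rV[R]_p) (M : R) :
  (forall k, enorm (s k) <= M) ->
  exists (f : nat -> nat) (l : 'rV[R]_p), (forall k, (k <= f k)%N) /\ vcvg (fun k => s (f k)) l.
Proof.
move=> HM.
have claim : forall j, (j <= p)%N -> exists (f : nat -> nat) (l : 'rV[R]_p),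
   (forall k, (k <= f k)%N) /\ forall e, 0 < e -> exists N, forall k, (N <= k)%N ->
   forall i : 'I_p, (i < j)%N -> `|s (f k) 0 i - l 0 i| < e.
  elim=> [_|j IH jp].
    exists id, 0; split=> // e ep; exists 0%N => k _ i; by rewrite ltn0.
  have [f [l [Hf Hl]]] := IH (ltnW jp).
  pose i0 : 'I_p := Ordinal jp.
  have [f' [l0 [Hf' Hl0]]] := @bw_real R (fun k => s (f k) 0 i0) M
    (fun k => le_trans (coord_le _ _) (HM _)).
  exists (fun k => f (f' k)), (\row_i (if i == i0 then l0 else l 0 i)); split.
    by move=> k; apply: leq_trans (Hf' k) (Hf _).
  move=> e ep; have [N1 H1] := Hl e ep; have [N2 H2] := Hl0 e ep.
  exists (maxn N1 N2) => k; rewrite geq_max => /andP [k1 k2] i ij; rewrite mxE.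
  case: eqP => [->|ne]; first exact: H2.
  apply: H1; first exact: leq_trans k1 (Hf' k).
  rewrite ltn_neqAle -ltnS ij andbT; apply/eqP => E; apply: ne; exact: val_inj.
have [f [l [Hf Hl]]] := claim p (leqnn p).
exists f, l; split=> // e ep.
set e' := e / (p%:R + 1).
have p1 : 0 < p%:R + 1 :> R by rewrite ltr_wpDl.
have e'p : 0 < e' by rewrite divr_gt0.
have [N HN] := Hl e' e'p.
exists N => k /HN Hk; rewrite enorm_lt //.
apply: (@le_lt_trans _ _ (p%:R * e' ^+ 2)).
  rewrite /dotv.
  apply: le_trans (ler_sum (P := xpredT) (G := fun _ => e' ^+ 2) _ _) _.
    move=> i _; have h := Hk i (ltn_ord i).
    rewrite !mxE -expr2 -real_normK ?num_real // lerXn2r ?nnegrE ?normr_ge0 ?ltW //.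
  by rewrite sumr_const card_ord mulr_natl.
have -> : p%:R * e' ^+ 2 = e ^+ 2 * (p%:R / (p%:R + 1) ^+ 2).
  by rewrite /e'; field; rewrite lt0r_neq0.
rewrite gtr_pMr ?exprn_gt0 // ltr_pdivrMr ?exprn_gt0 // mul1r.
have p0 : 0 <= p%:R :> R by [].
nra.
Qed.

Lemma tpos (R : realType) n (x xb : 'rV[R]_n) : x <> xb -> 0 < enorm (x - xb).
Proof. move=> ne; apply: enorm_gt0 => /eqP; rewrite subr_eq0 => /eqP; exact: ne. Qed.

Lemma scale_cancel (R : realType) n (t : R) (a b : 'rV[R]_n) :
  0 < t -> b + t *: (t^-1 *: (a - b)) = a.
Proof. by move=> tp; rewrite scalerA mulfV ?lt0r_neq0 // scale1r addrC subrK. Qed.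

Lemma rcvg_subs (R : realType) n (xs : nat -> 'rV[R]_n) xb (f : nat -> nat) :
  (forall k, (k <= f k)%N) -> vcvg xs xb -> rcvg (fun k => enorm (xs (f k) - xb)) 0.
Proof. move=> Hf H; apply: (rcvg_sub (s := fun k => enorm (xs k - xb))) => //; exact: rcvg_enorm. Qed.

Theorem mainTheorem5 (R : realType) (n m : nat)
  (g : 'rV[R]_n -> 'rV[R]_m) (D : 'rV[R]_m -> Prop)
  (xb u : 'rV[R]_n) (e : 'I_m -> 'rV[R]_m) :
  vcontinuous g -> enorm u = 1 -> calm_dir g xb u ->
  vclosed D -> PhigD g D xb 0 -> orthonormal_basis e ->
  (cond_gD g D xb u e -> quasi_normal_dir (PhigD g D) xb 0 u e) /\
  ((exists2 r : R, 0 < r & forall x, enorm (x - xb) < r -> calm_at g x) ->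
     (cond_gD g D xb u e <-> quasi_normal_dir (PhigD g D) xb 0 u e)).
Proof.
move=> gc nu calm _ _ _.
have part1 : cond_gD g D xb u e -> quasi_normal_dir (PhigD g D) xb 0 u e.
  move=> C [lam [lam0 [_ [xs [ys [lams [etas H]]]]]]].
  case: H => Hphi [Hne [Cx [Cy [Cl [Ce [Cdir [Cyd [Hrc Hsign]]]]]]]].
  have TA k := transA (Hrc k).
  pose t k := enorm (xs k - xb).
  have tp k : 0 < t k by apply: tpos.
  have tn k : t k != 0 := lt0r_neq0 (tp k).
  pose w k := (t k)^-1 *: (g (xs k) - g xb).
  have [eps [delta [L [epsp deltap Lp Hcalm]]]] := calm.
  have [N HN] : exists N, forall k, (N <= k)%N -> enorm (w k) <= L.
    have [N1 H1] := Cdir delta deltap.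
    have [N2 H2] := Cx eps epsp.
    exists (maxn N1 N2) => k; rewrite geq_max => /andP [k1 k2].
    have h1 := H1 k k1; have h2 := H2 k k2.
    have hc : enorm (g (xs k) - g xb) <= L * t k.
      apply: Hcalm; split; last exact: ltW.
      rewrite nu mulr1 scale1r.
      have -> : enorm (xs k - xb) *: u - (xs k - xb) =
          - (t k *: ((t k)^-1 *: (xs k - xb) - u)).
        by rewrite scalerBr scalerA (mulfV (tn k)) scale1r [RHS]opprB.
      rewrite enormN enormZ ger0_norm; last exact: ltW (tp k).
      rewrite [X in _ <= X]mulrC; apply: ler_wpM2l; [exact: ltW (tp k) | exact: ltW h1].
    rewrite /w enormZ ger0_norm; last by rewrite invr_ge0 ltW.
    apply: (le_trans (ler_wpM2l _ hc)); first by rewrite invr_ge0 ltW.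
    by rewrite mulrCA mulVf // mulr1.
  have [f [v [Hf Hv]]] := bw_vec (fun k => HN (k + N)%N (leq_addl _ _)).
  pose sg k := (f k + N)%N.
  have Hsg k : (k <= sg k)%N by apply: leq_trans (Hf k) (leq_addr _ _).
  have Hvv : vcvg (fun k => (t (sg k))^-1 *: (g (xs (sg k)) - g xb)) v := Hv.
  have Hys : vcvg (fun k => (t (sg k))^-1 *: (ys (sg k) - 0)) 0
    := vcvg_sub (s := fun k => (t k)^-1 *: (ys k - 0)) Hsg Cyd.
  have Hvz : vcvg (fun k => (t (sg k))^-1 *: ((g (xs (sg k)) - ys (sg k)) - g xb)) v.
    have := vcvgB Hvv Hys; rewrite subr0; apply: vcvg_ext => k; veq.
  have Htc : rcvg (fun k => t (sg k)) 0 := rcvg_subs Hsg Cx.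
  apply: C; exists v, lam; split=> //; split.
    exists (fun k => t (sg k)), (fun k => (t (sg k))^-1 *: ((g (xs (sg k)) - ys (sg k)) - g xb)),
      (fun k => lams (sg k)).
    do 4 (split => //); first exact: vcvg_sub.
    by move=> k; rewrite scale_cancel //; exact: (TA _).1.
  split.
    exists (fun k => t (sg k)),
      (fun k => row_mx ((t (sg k))^-1 *: (xs (sg k) - xb)) ((t (sg k))^-1 *: (g (xs (sg k)) - g xb))),
      (fun k => row_mx (etas (sg k)) (- lams (sg k))).
    do 3 (split => //).
      apply: vcvg_row_mx => //.
      exact: (vcvg_sub (s := fun k => (t k)^-1 *: (xs k - xb))).
    split.
      apply: vcvg_row_mx; first exact: vcvg_sub.
      by apply: vcvgN; exact: vcvg_sub.
    move=> k; rewrite scale_row_mx add_row_mx !scale_cancel //; exact: (TA _).2.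
  exists (fun k => xs (sg k)), (fun k => g (xs (sg k)) - ys (sg k)),
    (fun k => lams (sg k)), (fun k => etas (sg k)).
  split; first by move=> k; exact: Hne.
  split; first by move=> k; exact: Hphi.
  split; first exact: vcvg_sub.
  split.
    have := vcvgB (vcvg_cont gc (vcvg_sub Hsg Cx)) (vcvg_sub Hsg Cy).
    by rewrite subr0.
  split; first exact: vcvg_sub.
  split; first exact: vcvg_sub.
  split; first exact: (vcvg_sub (s := fun k => (t k)^-1 *: (xs k - xb))).
  split; first exact: Hvz.
  split; first exact: Hvv.
  split; first by move=> k; exact: (TA _).2.
  split; first by move=> k; exact: (TA _).1.
  move=> k i hi; have := Hsign (sg k) i hi.
  by have -> : g (xs (sg k)) - (g (xs (sg k)) - ys (sg k)) = ys (sg k) - 0 by veq.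
split; first exact: part1.
move=> [r rp Hr]; split; first exact: part1.
move=> Q [v [lam [lam0 [_ [_ [xs [zs [lams [etas H]]]]]]]]].
case: H => Hne [HD [Cx [Cz [Cl [Ce [Cdir [Czd [Cgd [Hrc [Hrn Hsign]]]]]]]]]].
apply: Q.
have [N HN] := Cx r rp.
pose sg k := (k + N)%N.
have Hsg k : (k <= sg k)%N by apply: leq_addr.
pose t k := enorm (xs k - xb).
have tp k : 0 < t k by apply: tpos.
pose ys k := g (xs k) - zs k.
have TB k : rcoder (PhigD g D) (xs (sg k)) (ys (sg k)) (lams (sg k)) (etas (sg k)).
  apply: transB; [apply: Hr; apply: HN; exact: leq_addl | exact: Hrn | exact: Hrc].
have Hys : vcvg (fun k => (t (sg k))^-1 *: (ys (sg k) - 0)) 0.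
  have := vcvgB (vcvg_sub (s := fun k => (t k)^-1 *: (g (xs k) - g xb)) Hsg Cgd)
     (vcvg_sub (s := fun k => (t k)^-1 *: (zs k - g xb)) Hsg Czd).
  rewrite subrr; apply: vcvg_ext => k; rewrite /ys; veq.
exists lam; split=> //; split.
  exists (fun k => t (sg k)),
    (fun k => row_mx ((t (sg k))^-1 *: (xs (sg k) - xb)) ((t (sg k))^-1 *: (ys (sg k) - 0))),
    (fun k => row_mx (etas (sg k)) (- lams (sg k))).
  split; first by move=> k; exact: tp.
  split; first exact: (rcvg_subs Hsg Cx).
  split.
    apply: vcvg_row_mx => //.
    exact: (vcvg_sub (s := fun k => (t k)^-1 *: (xs k - xb))).
  split.
    apply: vcvg_row_mx; first exact: vcvg_sub.
    by apply: vcvgN; exact: vcvg_sub.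
  move=> k; rewrite scale_row_mx add_row_mx !scale_cancel //.
  exact: TB.
exists (fun k => xs (sg k)), (fun k => ys (sg k)),
  (fun k => lams (sg k)), (fun k => etas (sg k)).
split.
  move=> k; rewrite /PhigD /ys.
  by have -> : g (xs (sg k)) - (g (xs (sg k)) - zs (sg k)) = zs (sg k) by veq.
split; first by move=> k; exact: Hne.
split; first exact: vcvg_sub.
split.
  have := vcvgB (vcvg_cont gc (vcvg_sub Hsg Cx)) (vcvg_sub Hsg Cz).
  by rewrite subrr.
split; first exact: vcvg_sub.
split; first exact: vcvg_sub.
split; first exact: (vcvg_sub (s := fun k => (t k)^-1 *: (xs k - xb))).
split; first exact: Hys.
split; first exact: TB.
move=> k i hi; rewrite subr0; exact: Hsign.
Qed.
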